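(* Let $\mathcal{M}_n=\{\rho_\theta : \theta\in\Theta\}$, $\Theta\subset\mathbb{R}^n$ open, be a regular family of density matrices on $\mathbb{C}^d$ ($d<\infty$), with parameters split as $\theta=(\theta_I,\theta_N)$, $\theta_I=(\theta_1,\dots,\theta_m)$, $\theta_N=(\theta_{m+1},\dots,\theta_n)$, $m<n$. Fix a point $\theta$ and an $m\times m$ real symmetric matrix $W_I>0$. Define $$C_{\theta_I}[W_I]=\min_{\hat\Pi_I \text{ l.u. for } \theta_I}\mathrm{Tr}\big(W_I V_{\theta_I}[\hat\Pi_I]\big),\qquad C^{\mathcal{E}_\theta}_{\theta_I}[W_I]=\inf_{\hat\Pi\in\mathcal{E}_\theta}\mathrm{Tr}\big(W_I V_{\theta_I}[\hat\Pi]\big),$$ $$C^{\lim}_{\theta_I}[W_I]=\lim_{\epsilon\to0^+}C_\theta\big[W_I\oplus\epsilon I_{n-m}\big],\qquad\text{where } C_\theta[W_n]=\min_{\hat\Pi\in\mathcal{E}_\theta}\mathrm{Tr}\big(W_nV_\theta[\hat\Pi]\big)$$ for $n\times n$ weight matrices $W_n>0$, and $I_{n-m}$ is the $(n-m)\times(n-m)$ identity. Then $$C_{\theta_I}[W_I]=C^{\mathcal{E}_\theta}_{\theta_I}[W_I]=C^{\lim}_{\theta_I}[W_I].$$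
   Context: A POVM is a finite family $\Pi=\{\Pi_x\}_{x\in\mathcal{X}}$ of positive semidefinite $d\times d$ matrices summing to the identity; it gives the probability distribution $p_\theta(x\mid\Pi)=\mathrm{tr}(\rho_\theta\Pi_x)$, and $E_\theta[\,\cdot\mid\Pi]$ denotes expectation under it. A quantum estimator for all parameters is $\hat\Pi=(\Pi,\hat\theta)$ with $\hat\theta=(\hat\theta_1,\dots,\hat\theta_n)$ real functions on $\mathcal{X}$; its MSE matrix is $V_\theta[\hat\Pi]=\big[E_\theta[(\hat\theta_i(X)-\theta_i)(\hat\theta_j(X)-\theta_j)\mid\Pi]\big]_{i,j=1}^n$, and $V_{\theta_I}[\hat\Pi]$ denotes its upper-left $m\times m$ block (indices $1,\dots,m$). An estimator for the parameters of interest is $\hat\Pi_I=(\Pi,\hat\theta_I)$ with $\hat\theta_I=(\hat\theta_1,\dots,\hat\theta_m)$, with $m\times m$ MSE matrix $V_{\theta_I}[\hat\Pi_I]=\big[E_\theta[(\hat\theta_i(X)-\theta_i)(\hat\theta_j(X)-\theta_j)\mid\Pi]\big]_{i,j=1}^m$. $\hat\Pi_I$ is locally unbiased (l.u.) for $\theta_I$ at $\theta$ if $E_\theta[\hat\theta_i(X)\mid\Pi]=\theta_i$ and $\partial_{\theta_j}E_\theta[\hat\theta_i(X)\mid\Pi]=\delta_{ij}$ at $\theta$ for all $i\in\{1,\dots,m\}$, $j\in\{1,\dots,n\}$. $\mathcal{E}_\theta$ is the set of estimators $\hat\Pi=(\Pi,\hat\theta)$ that are locally unbiased for all parameters at $\theta$,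 i.e. the same two conditions hold for all $i,j\in\{1,\dots,n\}$. Regularity: the model is smooth, its derivatives $\partial_i\rho_\theta$ are linearly independent, and there exist POVMs whose classical models $\{p_\theta(\cdot\mid\Pi)\}$ are regular with linearly independent score functions $\partial_{\theta_i}\log p_\theta(x\mid\Pi)$, $i=1,\dots,n$, at $\theta$ (so that the minima above are taken over nonempty sets and are well defined). *)

(* Defs.v *)
From HB Require Import structures.
From mathcomp Require Import all_boot all_order all_algebra.
From mathcomp Require Import all_classical all_reals all_analysis.
From mathcomp Require Import complex.
Set Implicit Arguments. Unset Strict Implicit. Unset Printing Implicit Defensive.
Import Order.TTheory GRing.Theory Num.Theory.
Import numFieldNormedType.Exports.
Local Open Scope classical_set_scope.
Local Open Scope ring_scope.

(* Parameter space is R^n, realised as row vectors 'rV[R]_n. *)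
Definition ev (R : realType) (n : nat) (j : 'I_n) : 'rV[R]_n := delta_mx 0 j.

Fixpoint Ck_on (R : realType) (n : nat) (U : set 'rV[R]_n) (k : nat)
    (f : 'rV[R]_n -> R) : Prop :=
  match k with
  | 0 => True
  | k'.+1 => (forall (j : 'I_n) (x : 'rV[R]_n), U x -> derivable f x (ev R j))
             /\ (forall j : 'I_n, Ck_on U k' (fun x => 'D_(ev R j) f x))
  end.

Definition smooth_on (R : realType) (n : nat) (U : set 'rV[R]_n)
    (f : 'rV[R]_n -> R) : Prop := forall k, Ck_on U k f.

Definition adj (R : realType) (p q : nat) (A : 'M[R[i]]_(p, q)) : 'M[R[i]]_(q, p) :=
  (map_mx (@conjc R) A)^T.

Definition psd (R : realType) (d : nat) (A : 'M[R[i]]_d) : Prop :=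
  forall v : 'cV[R[i]]_d, 0 <= (adj v *m A *m v) 0 0.

Definition density_matrix (R : realType) (d : nat) (A : 'M[R[i]]_d) : Prop :=
  psd A /\ \tr A = 1.

Definition povm (R : realType) (d : nat) (X : finType) (P : X -> 'M[R[i]]_d) : Prop :=
  (forall x, psd (P x)) /\ \sum_(x : X) P x = 1%:M.

Definition posdef_weight (R : realType) (m : nat) (W : 'M[R]_m) : Prop :=
  W^T = W /\ forall v : 'cV[R]_m, v != 0 -> 0 < (v^T *m W *m v) 0 0.

Section Model.
Variables (R : realType) (d n : nat) (rho : 'rV[R]_n -> 'M[R[i]]_d).

Definition drho (j : 'I_n) (t : 'rV[R]_n) : 'M[R[i]]_d :=
  \matrix_(a, b) (('D_(ev R j) (fun s => complex.Re (rho s a b)) t) +i*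
                  ('D_(ev R j) (fun s => complex.Im (rho s a b)) t))%C.

Definition prob (X : finType) (P : X -> 'M[R[i]]_d) (t : 'rV[R]_n) (x : X) : R :=
  complex.Re (\tr (rho t *m P x)).

Definition expect (X : finType) (P : X -> 'M[R[i]]_d) (f : X -> R) (t : 'rV[R]_n) : R :=
  \sum_(x : X) f x * prob P t x.

Definition regular_model (Theta : set 'rV[R]_n) : Prop :=
  open Theta
  /\ (forall t, Theta t -> density_matrix (rho t))
  /\ (forall a b, smooth_on Theta (fun s => complex.Re (rho s a b))
                  /\ smooth_on Theta (fun s => complex.Im (rho s a b)))
  /\ (forall t, Theta t -> forall c : 'I_n -> R,
        \sum_(j < n) (c j)%:C%C *: drho j t = 0 -> forall j, c j = 0).

Definition regular_classical_povm_exists (theta : 'rV[R]_n) : Prop :=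
  exists (X : finType) (P : X -> 'M[R[i]]_d),
    povm P /\ (forall x, 0 < prob P theta x) /\
    (forall c : 'I_n -> R,
       (forall x, \sum_(j < n) c j *
          ('D_(ev R j) (fun s => prob P s x) theta / prob P theta x) = 0) ->
       forall j, c j = 0).

(* MSE matrix of an estimator (P, th) with th : X -> R^p, where the
   estimated components are the parameters idx : 'I_p -> 'I_n *)
Definition mse (p : nat) (idx : 'I_p -> 'I_n) (X : finType) (P : X -> 'M[R[i]]_d)
    (th : X -> 'rV[R]_p) (theta : 'rV[R]_n) : 'M[R]_p :=
  \matrix_(i, j) expect P (fun x => (th x 0 i - theta 0 (idx i)) *
                                    (th x 0 j - theta 0 (idx j))) theta.

Definition loc_unbiased (p : nat) (idx : 'I_p -> 'I_n) (X : finType)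
    (P : X -> 'M[R[i]]_d) (th : X -> 'rV[R]_p) (theta : 'rV[R]_n) : Prop :=
  forall i : 'I_p,
    expect P (fun x => th x 0 i) theta = theta 0 (idx i) /\
    forall j : 'I_n,
      'D_(ev R j) (expect P (fun x => th x 0 i)) theta = (idx i == j)%:R.

End Model.

Section Bounds.
Variables (R : realType) (d m k : nat) (rho : 'rV[R]_(m + k) -> 'M[R[i]]_d)
          (theta : 'rV[R]_(m + k)).

Definition idxI (i : 'I_m) : 'I_(m + k) := lshift k i.

Definition C_I (W : 'M[R]_m) : R :=
  inf [set r : R | exists (X : finType) (P : X -> 'M[R[i]]_d) (th : X -> 'rV[R]_m),
         povm P /\ loc_unbiased rho idxI P th theta /\
         r = \tr (W *m mse rho idxI P th theta)].

Definition C_E (W : 'M[R]_m) : R :=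
  inf [set r : R | exists (X : finType) (P : X -> 'M[R[i]]_d)
                          (th : X -> 'rV[R]_(m + k)),
         povm P /\ loc_unbiased rho id P th theta /\
         r = \tr (W *m ulsubmx (mse rho id P th theta))].

Definition C_full (W : 'M[R]_(m + k)) : R :=
  inf [set r : R | exists (X : finType) (P : X -> 'M[R[i]]_d)
                          (th : X -> 'rV[R]_(m + k)),
         povm P /\ loc_unbiased rho id P th theta /\
         r = \tr (W *m mse rho id P th theta)].

End Bounds.

(* Main.v *)
Require Import Defs.
From HB Require Import structures.
From mathcomp Require Import all_boot all_order all_algebra.
From mathcomp Require Import all_classical all_reals all_analysis.
From mathcomp Require Import complex.
From mathcomp Require Import ring lra.
Set Implicit Arguments. Unset Strict Implicit. Unset Printing Implicit Defensive.
Import Order.TTheory GRing.Theory Num.Theory.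
Import numFieldNormedType.Exports.
Local Open Scope classical_set_scope.
Local Open Scope ring_scope.


Section Pos.
Variables (R : realType) (d : nat).
Implicit Types (A B : 'M[R[i]]_d).

Definition qf A (u w : 'cV[R[i]]_d) := (adj u *m A *m w) 0 0.

Lemma adjD (u w : 'cV[R[i]]_d) : adj (u + w) = adj u + adj w.
Proof. by apply/matrixP => i j; rewrite !mxE rmorphD. Qed.

Lemma adjZ (l : R[i]) (u : 'cV[R[i]]_d) : adj (l *: u) = l^* *: adj u.
Proof. by apply/matrixP => i j; rewrite !mxE rmorphM. Qed.

Lemma qfDl A u v w : qf A (u + v) w = qf A u w + qf A v w.
Proof. by rewrite /qf adjD !mulmxDl mxE. Qed.
Lemma qfDr A u v w : qf A w (u + v) = qf A w u + qf A w v.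
Proof. by rewrite /qf mulmxDr mxE. Qed.
Lemma qfZl A l u w : qf A (l *: u) w = l^* * qf A u w.
Proof. by rewrite /qf adjZ -!scalemxAl mxE. Qed.
Lemma qfZr A l u w : qf A w (l *: u) = l * qf A w u.
Proof. by rewrite /qf -!scalemxAr mxE. Qed.

Lemma adj_delta (a : 'I_d) : adj (delta_mx a 0 : 'cV[R[i]]_d) = delta_mx 0 a.
Proof.
apply/matrixP => i j; rewrite !mxE.
by rewrite conjc_nat andbC. Qed.

Lemma qf_delta A (a b : 'I_d) : qf A (delta_mx a 0) (delta_mx b 0) = A a b.
Proof. by rewrite /qf adj_delta -rowE -colE !mxE. Qed.

Lemma ge0_conj (z : R[i]) : 0 <= z -> z^* = z.
Proof. by move=> /ger0_real; rewrite CrealE => /eqP. Qed.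

Lemma psd_herm A : psd A -> forall a b, (A b a)^* = A a b.
Proof.
move=> hA a b.
have diag c : (A c c)^* = A c c.
  by apply: ge0_conj; have := hA (delta_mx c 0); rewrite -/(qf _ _ _) qf_delta.
have h l : (A a a + l * A a b + l^* * A b a + l^* * l * A b b)^*
    = A a a + l * A a b + l^* * A b a + l^* * l * A b b.
  apply: ge0_conj.
  have := hA (delta_mx a 0 + l *: delta_mx b 0); rewrite -/(qf _ _ _).
  by rewrite !qfDl !qfDr !qfZl !qfZr !qf_delta mulrA addrA.
have ci : ('i : R[i])^* = - 'i by exact: conjCi.
have h1 := h 1; have h2 := h 'i.
rewrite !rmorphD !rmorphM /= in h1 h2.
rewrite !conjCK !diag in h1 h2.
rewrite conjC1 !mul1r in h1.
rewrite ci !mulNr !mulrN in h2.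
have ii : 'i * 'i = -1 :> R[i] by rewrite -expr2 sqrCi.
rewrite ii in h2.
set x := A a b in h1 h2 *; set y := A b a in h1 h2 *.
set x' := x^* in h1 h2 *; set y' := y^* in h1 h2 *.
have E1 : x' + y' - (x + y) = 0.
  have -> : x' + y' - (x + y) = (A a a + x' + y' + A b b) - (A a a + x + y + A b b) by ring.
  by rewrite h1 subrr.
have E2 : 'i * (y' - x' - x + y) = 0.
  have -> : 'i * (y' - x' - x + y) = (A a a - 'i * x' + 'i * y' + - (-1) * A b b) - (A a a + 'i * x - 'i * y - -1 * A b b) by ring.
  by rewrite h2 subrr.
move/eqP: E2; rewrite mulf_eq0 (negbTE (neq0Ci _)) /= => /eqP E2.
have E3 : 2%:R * (y' - x) = 0.
  have -> : 2%:R * (y' - x) = (x' + y' - (x + y)) + (y' - x' - x + y) by rewrite mulr2n mulrDl mul1r; ring.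
  by rewrite E1 E2 addr0.
move/eqP: E3; rewrite mulf_eq0 pnatr_eq0 /= subr_eq0 => /eqP //.
Qed.

Lemma psd_hermsym A : psd A -> A \is hermsymmx.
Proof.
move=> hA; apply/is_hermitianmxP; rewrite expr0 scale1r.
by apply/matrixP => a b; rewrite !mxE psd_herm.
Qed.

Lemma psd_conj_diag A (U : 'M[R[i]]_d) i : psd A -> 0 <= (U *m A *m map_mx Num.conj (U^T)) i i.
Proof.
move=> hA.
have -> : (U *m A *m map_mx Num.conj (U^T)) i i
   = (adj (col i (map_mx Num.conj (U^T))) *m A *m col i (map_mx Num.conj (U^T))) 0 0.
  have -> : adj (col i (map_mx Num.conj (U^T))) = row i U.
    by apply/matrixP => a b; rewrite !mxE; exact: conjCK.
  by rewrite colE rowE !mulmxA -colE -!mulmxA -rowE !mxE.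
exact: hA.
Qed.

Lemma tr_psd_ge0 A B : psd A -> psd B -> 0 <= \tr (A *m B).
Proof.
move=> hA hB.
have /hermitian_normalmx/orthomx_spectralP eB := psd_hermsym hB.
set U := spectralmx B in eB; set D := spectral_diag B in eB.
have Uu : U \is unitarymx by exact: spectral_unitarymx.
have UU : U *m map_mx Num.conj (U^T) = 1%:M by apply/unitarymxP.
rewrite invmx_unitary // in eB.
have eD : diag_mx D = U *m B *m map_mx Num.conj (U^T).
  by rewrite eB !mulmxA UU mul1mx -!mulmxA UU mulmx1.
rewrite eB !mulmxA mxtrace_mulC !mulmxA.
rewrite /mxtrace; apply: sumr_ge0 => i _.
rewrite mul_mx_diag.
rewrite mxE; apply: mulr_ge0; first exact: psd_conj_diag.
have := psd_conj_diag U i hB; rewrite -eD mxE eqxx mulr1n //.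
Qed.
End Pos.



Lemma ReD (R : realType) (x y : R[i]) : complex.Re (x + y) = complex.Re x + complex.Re y.
Proof. by case: x; case: y. Qed.
Lemma ReM (R : realType) (x y : R[i]) :
  complex.Re (x * y) = complex.Re x * complex.Re y - complex.Im x * complex.Im y.
Proof. by case: x; case: y. Qed.
Lemma Re_sum (R : realType) (I : Type) (r : seq I) (F : I -> R[i]) :
  complex.Re (\sum_(i <- r) F i) = \sum_(i <- r) complex.Re (F i).
Proof. by apply: (big_morph _ (@ReD R)). Qed.
Lemma Re_ge0 (R : realType) (x : R[i]) : 0 <= x -> 0 <= complex.Re x.
Proof. by case: x => a b /andP[]. Qed.

Lemma derive_bigseq (R : realType) (V : normedModType R) (T : Type) (r : seq T)
  (F : T -> V -> R) (x v : V) :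
  (forall i, derivable (F i) x v) ->
  derivable (fun s => \sum_(i <- r) F i s) x v /\
  'D_v (fun s => \sum_(i <- r) F i s) x = \sum_(i <- r) 'D_v (F i) x.
Proof.
move=> hF; elim: r => [|a r [IH1 IH2]].
  have -> : (fun s => \sum_(i <- [::]) F i s) = cst 0.
    by apply/funext => s; rewrite big_nil.
  by rewrite big_nil derive_cst; split => //; exact: derivable_cst.
have -> : (fun s => \sum_(i <- a :: r) F i s) = F a + (fun s => \sum_(i <- r) F i s).
  by apply/funext => s; rewrite big_cons.
rewrite big_cons deriveD //; split => //. - exact (derivableD (hF a) IH1).
- by rewrite IH2.
Qed.

Lemma derivable_sumseq (R : realType) (V : normedModType R) (T : Type) (r : seq T)
  (F : T -> V -> R) (x v : V) :
  (forall i, derivable (F i) x v) ->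
  derivable (fun s => \sum_(i <- r) F i s) x v.
Proof. by move=> h; case: (derive_bigseq r h). Qed.
Lemma derive_sumseq (R : realType) (V : normedModType R) (T : Type) (r : seq T)
  (F : T -> V -> R) (x v : V) :
  (forall i, derivable (F i) x v) ->
  'D_v (fun s => \sum_(i <- r) F i s) x = \sum_(i <- r) 'D_v (F i) x.
Proof. by move=> h; case: (derive_bigseq r h). Qed.

Lemma deriveZl (R : realType) (V : normedModType R) (f : V -> R) (c : R) x v :
  derivable f x v -> 'D_v (fun s => c * f s) x = c * 'D_v f x.
Proof. move=> hf; exact: (deriveZ c hf). Qed.
Lemma derivableZl (R : realType) (V : normedModType R) (f : V -> R) (c : R) x v :
  derivable f x v -> derivable (fun s => c * f s) x v.
Proof. move=> hf; exact: (derivableZ (k:=c) hf). Qed.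

Arguments derivableZl {R V f} c {x v}.
Arguments deriveZl {R V f} c {x v}.
Arguments derivable_sumseq {R V T} r {F x v}.
Arguments derive_sumseq {R V T} r {F x v}.

Section Model.
Variables (R : realType) (d n : nat) (rho : 'rV[R]_n -> 'M[R[i]]_d)
  (Theta : set 'rV[R]_n).
Hypothesis oT : open Theta.
Hypothesis dens : forall t, Theta t -> density_matrix (rho t).
Hypothesis smooth : forall a b, smooth_on Theta (fun s => complex.Re (rho s a b))
                  /\ smooth_on Theta (fun s => complex.Im (rho s a b)).

Lemma prob_ge0 (X : finType) (P : X -> 'M[R[i]]_d) t x :
  povm P -> Theta t -> 0 <= prob rho P t x.
Proof.
move=> [hP _] Tt; apply: Re_ge0; apply: tr_psd_ge0; last exact: hP.
by case: (dens Tt).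
Qed.

Lemma sum_prob (X : finType) (P : X -> 'M[R[i]]_d) t :
  povm P -> Theta t -> \sum_x prob rho P t x = 1.
Proof.
move=> [_ hP] Tt; rewrite /prob -Re_sum.
have -> : \sum_x \tr (rho t *m P x) = \tr (rho t *m \sum_x P x)
  by rewrite mulmx_sumr raddf_sum.
rewrite hP mulmx1.
by case: (dens Tt) => _ ->.
Qed.

Lemma prob_expand (X : finType) (P : X -> 'M[R[i]]_d) x :
  (fun s => prob rho P s x) =
  (fun s => \sum_(a < d) \sum_(b < d)
     (complex.Re (P x b a) * complex.Re (rho s a b) - complex.Im (P x b a) * complex.Im (rho s a b))).
Proof.
apply/funext => s; rewrite /prob /mxtrace Re_sum; apply: eq_bigr => a _.
rewrite mxE Re_sum; apply: eq_bigr => b _; rewrite ReM; ring.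
Qed.

Lemma derivable_prob (X : finType) (P : X -> 'M[R[i]]_d) x t (j : 'I_n) :
  Theta t -> derivable (fun s => prob rho P s x) t (ev R j).
Proof.
move=> Tt; rewrite prob_expand.
apply: derivable_sumseq => a.
apply: derivable_sumseq => b.
have h1 := (smooth a b).1 1%N; have h2 := (smooth a b).2 1%N.
case: h1 => [h1 _]; case: h2 => [h2 _].
have := derivableB (derivableZl (complex.Re (P x b a)) (h1 j t Tt))
                  (derivableZl (complex.Im (P x b a)) (h2 j t Tt)).
exact.
Qed.
End Model.

Section Model2.
Variables (R : realType) (d n : nat) (rho : 'rV[R]_n -> 'M[R[i]]_d)
  (Theta : set 'rV[R]_n).
Hypothesis oT : open Theta.
Hypothesis dens : forall t, Theta t -> density_matrix (rho t).
Hypothesis smooth : forall a b, smooth_on Theta (fun s => complex.Re (rho s a b))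
                  /\ smooth_on Theta (fun s => complex.Im (rho s a b)).

Lemma D_local (f g : 'rV[R]_n -> R) t v : Theta t ->
  (forall s, Theta s -> f s = g s) -> 'D_v f t = 'D_v g t.
Proof.
move=> Tt h; apply: near_eq_derive.
exact: (filterS h (open_nbhs_nbhs (conj oT Tt))).
Qed.

Lemma derive_expect (X : finType) (P : X -> 'M[R[i]]_d) f t (j : 'I_n) :
  Theta t -> 'D_(ev R j) (expect rho P f) t =
             \sum_x f x * 'D_(ev R j) (fun s => prob rho P s x) t.
Proof.
move=> Tt; rewrite /expect (derive_sumseq (index_enum X)).
  by apply: eq_bigr => x _; rewrite deriveZl //; exact (derivable_prob (P:=P) (x:=x) (j:=j) smooth Tt).
by move=> x; apply: derivableZl; exact (derivable_prob (P:=P) (x:=x) (j:=j) smooth Tt).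
Qed.

Lemma expect_cst (X : finType) (P : X -> 'M[R[i]]_d) c t :
  povm P -> Theta t -> expect rho P (fun _ => c) t = c.
Proof.
by move=> hP Tt; rewrite /expect -mulr_sumr (sum_prob dens) ?mulr1.
Qed.

Lemma sum_dprob (X : finType) (P : X -> 'M[R[i]]_d) t (j : 'I_n) :
  povm P -> Theta t -> \sum_x 'D_(ev R j) (fun s => prob rho P s x) t = 0.
Proof.
move=> hP Tt.
have := derive_expect P (fun _ => 1) j Tt.
under eq_bigr do rewrite mul1r.
move=> <-; rewrite (@D_local _ (cst 1)) ?derive_cst // => s Ts.
exact: expect_cst.
Qed.

Lemma expect_lin (X : finType) (P : X -> 'M[R[i]]_d) (f : X -> R) u a t :
  povm P -> Theta t -> expect rho P (fun x => u + a * f x) t = u + a * expect rho P f t.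
Proof.
move=> hP Tt; rewrite /expect.
under eq_bigr do rewrite mulrDl.
by rewrite big_split /= -mulr_sumr (sum_prob dens) // mulr1 mulr_sumr; congr (_ + _);
  apply: eq_bigr => x _; rewrite mulrA.
Qed.
End Model2.

Section Model3.
Variables (R : realType) (d n : nat) (rho : 'rV[R]_n -> 'M[R[i]]_d)
  (Theta : set 'rV[R]_n).
Hypothesis oT : open Theta.
Hypothesis dens : forall t, Theta t -> density_matrix (rho t).
Hypothesis smooth : forall a b, smooth_on Theta (fun s => complex.Re (rho s a b))
                  /\ smooth_on Theta (fun s => complex.Im (rho s a b)).
Variable theta : 'rV[R]_n.
Hypothesis Tth : Theta theta.

Lemma lu_full_exists : regular_classical_povm_exists rho theta ->
  exists (X : finType) (P : X -> 'M[R[i]]_d) (th : X -> 'rV[R]_n),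
    povm P /\ loc_unbiased rho id P th theta.
Proof.
case=> X [P [hP [ppos hind]]].
pose Dp x l := 'D_(ev R l) (fun s => prob rho P s x) theta.
pose Dm : 'M[R]_(n, #|{: X}|) := \matrix_(l, j) Dp (enum_val j) l.
have rf : row_free Dm.
  apply: inj_row_free => v hv; apply/rowP => l; rewrite mxE.
  have h0 : forall x, \sum_(j < n) v 0 j * (Dp x j / prob rho P theta x) = 0.
    move=> x; have := congr1 (fun M : 'M[R]_(1, #|{: X}|) => M 0 (enum_rank x)) hv.
    rewrite !mxE => hx.
    under eq_bigr do rewrite mulrA.
    rewrite -mulr_suml.
    have -> : \sum_(j < n) v 0 j * Dp x j = 0.
      by rewrite -[RHS]hx; apply: eq_bigr => j _; rewrite mxE enum_rankK.
    by rewrite mul0r.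
  exact: (hind (fun j => v 0 j) h0 l).
have [B hB] := row_freeP rf.
pose fl x i := B (enum_rank x) i.
have key : forall i l, \sum_x fl x i * Dp x l = (i == l)%:R.
  move=> i l; have := congr1 (fun M : 'M[R]_n => M l i) hB; rewrite !mxE eq_sym => <-.
  rewrite (reindex (@enum_val _ (mem {: X}))) /=; last first.
    by apply: onW_bij; exact: enum_val_bij.
  by apply: eq_bigr => j _; rewrite /fl enum_valK mxE mulrC.
pose cc i := \sum_y fl y i * prob rho P theta y.
exists X, P, (fun x => \row_i (theta 0 i + fl x i - cc i)).
split=> // i; split.
- rewrite /expect.
  rewrite (eq_bigr (fun x => (theta 0 i - cc i) * prob rho P theta x + fl x i * prob rho P theta x)); last first.
    by move=> x _; rewrite mxE; ring.
  by rewrite big_split /= -mulr_sumr (sum_prob dens) // mulr1 subrK.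
- move=> j; rewrite (derive_expect smooth) //.
  rewrite (eq_bigr (fun x => (theta 0 i - cc i) * Dp x j + fl x i * Dp x j)); last first.
    by move=> x _; rewrite mxE /Dp; ring.
  by rewrite big_split /= -mulr_sumr (sum_dprob oT dens smooth) // mulr0 add0r key.
Qed.
End Model3.

Section Mix.
Variables (R : realType) (d n : nat) (rho : 'rV[R]_n -> 'M[R[i]]_d).
Variables (X Y : finType) (P : X -> 'M[R[i]]_d) (P' : Y -> 'M[R[i]]_d) (c : R).

Definition mixQ (z : X + Y) : 'M[R[i]]_d :=
  match z with inl x => (c%:C)%C *: P x | inr y => ((1 - c)%:C)%C *: P' y end.

Lemma prob_scale (a : R) (A : 'M[R[i]]_d) t :
  complex.Re (\tr (rho t *m ((a%:C)%C *: A))) = a * complex.Re (\tr (rho t *m A)).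
Proof. by rewrite -scalemxAr mxtraceZ ReM /= mul0r subr0. Qed.

Lemma expect_mix g t : expect rho mixQ g t =
  c * expect rho P (fun x => g (inl x)) t + (1 - c) * expect rho P' (fun y => g (inr y)) t.
Proof.
rewrite /expect big_sumType /= !mulr_sumr; congr (_ + _); apply: eq_bigr => x _;
  by rewrite /prob /= prob_scale; ring.
Qed.

Lemma psd_scale (a : R) (A : 'M[R[i]]_d) : 0 <= a -> psd A -> psd ((a%:C)%C *: A).
Proof.
move=> ha hA v; rewrite -scalemxAr -scalemxAl mxE; apply: mulr_ge0 => //.
by rewrite ler0c.
Qed.

Lemma povm_mix : 0 <= c <= 1 -> povm P -> povm P' -> povm mixQ.
Proof.
move=> /andP[c0 c1] [hP sP] [hP' sP']; split.
  by case=> [x|y] /=; apply: psd_scale => //; rewrite subr_ge0.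
rewrite big_sumType /= -!scaler_sumr sP sP' -scalerDl.
have -> : ((c%:C)%C + ((1 - c)%:C)%C) = 1 :> R[i].
  by apply/eqP; rewrite eq_complex /= addrC subrK addr0 !eqxx.
by rewrite scale1r.
Qed.
End Mix.

Section Main.
Variables (R : realType) (d m k : nat) (rho : 'rV[R]_(m + k) -> 'M[R[i]]_d)
  (Theta : set 'rV[R]_(m + k)).
Hypothesis oT : open Theta.
Hypothesis dens : forall t, Theta t -> density_matrix (rho t).
Hypothesis smooth : forall a b, smooth_on Theta (fun s => complex.Re (rho s a b))
                  /\ smooth_on Theta (fun s => complex.Im (rho s a b)).
Variable theta : 'rV[R]_(m + k).
Hypothesis Tth : Theta theta.

Lemma split_l (i : 'I_m) : fintype.split (lshift k i) = inl i.
Proof. exact: (unsplitK (inl i)). Qed.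
Lemma split_r (i : 'I_k) : fintype.split (rshift m i) = inr i.
Proof. exact: (unsplitK (inr i)). Qed.

Lemma mix_estimator (X : finType) (P : X -> 'M[R[i]]_d) (th : X -> 'rV[R]_m)
  (Y : finType) (P' : Y -> 'M[R[i]]_d) (eta : Y -> 'rV[R]_(m + k)) (c : R) (W : 'M[R]_m) :
  povm P -> loc_unbiased rho (@idxI m k) P th theta ->
  povm P' -> loc_unbiased rho id P' eta theta -> 0 < c < 1 ->
  exists (Z : finType) (Q : Z -> 'M[R[i]]_d) (ze : Z -> 'rV[R]_(m + k)),
    povm Q /\ loc_unbiased rho id Q ze theta /\
    \tr (W *m ulsubmx (mse rho id Q ze theta)) = c^-1 * \tr (W *m mse rho (@idxI m k) P th theta).
Proof.
move=> hP lu hP' lu' /andP[c0 c1].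
have cn0 : c != 0 by rewrite gt_eqF.
have cn1 : 1 - c != 0 by rewrite subr_eq0 eq_sym lt_eqF.
pose a (j : 'I_(m + k)) (x : X) :=
  match fintype.split j with inl i => th x 0 i - theta 0 j | inr _ => 0 end.
pose b (j : 'I_(m + k)) (y : Y) :=
  match fintype.split j with inl _ => 0 | inr _ => eta y 0 j - theta 0 j end.
pose ze (z : X + Y) := \row_j (match z with
    inl x => theta 0 j + c^-1 * a j x | inr y => theta 0 j + (1 - c)^-1 * b j y end).
exists (X + Y)%type, (mixQ P P' c), ze.
have eE : forall j t, Theta t -> expect rho (mixQ P P' c) (fun z => ze z 0 j) t
    = theta 0 j + expect rho P (a j) t + expect rho P' (b j) t.
  move=> j t Tt; rewrite expect_mix.
  have -> : (fun x => ze (inl x) 0 j) = (fun x => theta 0 j + c^-1 * a j x)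
    by apply/funext => x; rewrite mxE.
  have -> : (fun y => ze (inr y) 0 j) = (fun y => theta 0 j + (1 - c)^-1 * b j y)
    by apply/funext => y; rewrite mxE.
  rewrite !(expect_lin dens) //; field; apply/andP; split => //.
split; first by apply: povm_mix => //; rewrite !ltW.
split.
  move=> j; rewrite -(splitK j); case: (fintype.split j) => i /=.
  - have key : forall t, Theta t -> expect rho (mixQ P P' c) (fun z => ze z 0 (lshift k i)) t
        = expect rho P (fun x => th x 0 i) t.
      move=> t Tt; rewrite eE //.
      have -> : a (lshift k i) = fun x => - theta 0 (lshift k i) + 1 * th x 0 i.
        by apply/funext => x; rewrite /a split_l; ring.
      have -> : b (lshift k i) = fun x => 0 + 0 * eta x 0 (lshift k i).
        by apply/funext => x; rewrite /b split_l; ring.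
      rewrite !(expect_lin dens) //; ring.
    split; first by rewrite key //; case: (lu i).
    by move=> l; rewrite (D_local oT _ Tth key); case: (lu i) => _ ->.
  - have key : forall t, Theta t -> expect rho (mixQ P P' c) (fun z => ze z 0 (rshift m i)) t
        = expect rho P' (fun y => eta y 0 (rshift m i)) t.
      move=> t Tt; rewrite eE //.
      have -> : b (rshift m i) = fun x => - theta 0 (rshift m i) + 1 * eta x 0 (rshift m i).
        by apply/funext => x; rewrite /b split_r; ring.
      have -> : a (rshift m i) = fun x => 0.
        by apply/funext => x; rewrite /a split_r.
      have -> : expect rho P (fun _ => 0) t = 0.
        by rewrite /expect big1 // => x _; rewrite mul0r.
      rewrite !(expect_lin dens) //; ring.
    split; first by rewrite key //; case: (lu' (rshift m i)).
    by move=> l; rewrite (D_local oT _ Tth key); case: (lu' (rshift m i)) => _ ->.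
have -> : ulsubmx (mse rho id (mixQ P P' c) ze theta) = c^-1 *: mse rho (@idxI m k) P th theta.
  apply/matrixP => i i'; rewrite !mxE expect_mix.
  have -> : (fun y => (ze (inr y) 0 (lshift k i) - theta 0 (id (lshift k i))) *
                      (ze (inr y) 0 (lshift k i') - theta 0 (id (lshift k i')))) = fun _ => 0.
    by apply/funext => y; rewrite !mxE /b !split_l; ring.
  have -> : expect rho P' (fun _ => 0) theta = 0.
    by rewrite /expect big1 // => x _; rewrite mul0r.
  have -> : (fun x => (ze (inl x) 0 (lshift k i) - theta 0 (id (lshift k i))) *
                      (ze (inl x) 0 (lshift k i') - theta 0 (id (lshift k i'))))
       = fun x => c^-1 * (c^-1 * ((th x 0 i - theta 0 (@idxI m k i)) * (th x 0 i' - theta 0 (@idxI m k i')))).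
    by apply/funext => x; rewrite !mxE /a !split_l; ring.
  rewrite /expect.
  under eq_bigr do rewrite -!mulrA.
  under [in RHS]eq_bigr do rewrite -!mulrA.
  rewrite -!mulr_sumr.
  by field.
by rewrite -scalemxAr mxtraceZ.
Qed.

Lemma tr_mse_ge0 (p : nat) (idx : 'I_p -> 'I_(m + k)) (X : finType)
  (P : X -> 'M[R[i]]_d) (th : X -> 'rV[R]_p) (W : 'M[R]_p) :
  posdef_weight W -> povm P -> 0 <= \tr (W *m mse rho idx P th theta).
Proof.
move=> [_ hW] hP.
pose u x : 'cV[R]_p := \col_i (th x 0 i - theta 0 (idx i)).
have eM : mse rho idx P th theta = \sum_x prob rho P theta x *: (u x *m (u x)^T).
  apply/matrixP => i j; rewrite summxE /mse mxE /expect; apply: eq_bigr => x _.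
  by rewrite !mxE big_ord1 !mxE; ring.
rewrite eM mulmx_sumr raddf_sum /=; apply: sumr_ge0 => x _.
rewrite -scalemxAr mxtraceZ; apply: mulr_ge0; first exact: (prob_ge0 dens).
rewrite mulmxA mxtrace_mulC mulmxA trace_mx11.
have [->|nz] := eqVneq (u x) 0; first by rewrite trmx0 !mul0mx mxE.
exact/ltW/hW.
Qed.

Lemma tr_drsub_ge0 (X : finType) (P : X -> 'M[R[i]]_d) (th : X -> 'rV[R]_(m + k)) :
  povm P -> 0 <= \tr (drsubmx (mse rho id P th theta)).
Proof.
move=> hP; apply: sumr_ge0 => i _; rewrite !mxE /expect; apply: sumr_ge0 => x _.
by apply: mulr_ge0; [rewrite -expr2 sqr_ge0 | exact: (prob_ge0 dens)].
Qed.

Lemma tr_block (W : 'M[R]_m) (e : R) (M : 'M[R]_(m + k)) :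
  \tr (block_mx W 0 0 e%:M *m M) = \tr (W *m ulsubmx M) + e * \tr (drsubmx M).
Proof.
rewrite -{1}(submxK M) mulmx_block mxtrace_block !mul0mx addr0 add0r.
by rewrite mul_scalar_mx mxtraceZ.
Qed.

Lemma restrict_lu (X : finType) (P : X -> 'M[R[i]]_d) (th : X -> 'rV[R]_(m + k)) :
  loc_unbiased rho id P th theta ->
  loc_unbiased rho (@idxI m k) P (fun x => \row_i th x 0 (lshift k i)) theta /\
  mse rho (@idxI m k) P (fun x => \row_i th x 0 (lshift k i)) theta = ulsubmx (mse rho id P th theta).
Proof.
move=> lu; split.
  move=> i; have -> : (fun x => (\row_i0 th x 0 (lshift k i0)) 0 i) = (fun x => th x 0 (lshift k i)).
    by apply/funext => x; rewrite mxE.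
  exact: lu.
apply/matrixP => i j; rewrite !mxE; congr expect; apply/funext => x; rewrite !mxE //.
Qed.
End Main.

Unset Implicit Arguments.
Theorem theorem1 (R : realType) (d m k : nat) (hk : (0 < k)%N)
    (Theta : set 'rV[R]_(m + k)) (rho : 'rV[R]_(m + k) -> 'M[R[i]]_d)
    (theta : 'rV[R]_(m + k)) (W : 'M[R]_m) :
  regular_model rho Theta -> Theta theta ->
  regular_classical_povm_exists rho theta ->
  posdef_weight W ->
  C_I rho theta W = C_E rho theta W /\
  (fun eps : R => C_full rho theta (block_mx W 0 0 (eps%:M)))
      @ at_right 0 --> C_I rho theta W.
Proof.
move=> [oT [dens [smooth _]]] Tth hreg hW.
have [Y [P' [eta [hP' lu']]]] := lu_full_exists oT dens smooth Tth hreg.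
rewrite /C_I /C_E /C_full.
set SI := (X in inf X = _ /\ _).
set SE := (X in _ = inf X /\ _).
have SIge0 : forall r, SI r -> 0 <= r.
  by move=> r [X [P [th [hP [lu ->]]]]]; exact: (tr_mse_ge0 dens).
have SEsub : forall r, SE r -> SI r.
  move=> r [X [P [th [hP [lu ->]]]]].
  have [lu2 e2] := restrict_lu lu.
  by exists X, P, (fun x => \row_i th x 0 (lshift k i)); rewrite e2.
have SEne : SE !=set0.
  by exists (\tr (W *m ulsubmx (mse rho id P' eta theta))), Y, P', eta.
have SImix : forall r, SI r -> forall c, 0 < c < 1 -> SE (c^-1 * r).
  move=> r [X [P [th [hP [lu ->]]]]] c c01.
  have [Z [Q [ze [hQ [luQ eQ]]]]] := mix_estimator oT dens Tth W hP lu hP' lu' c01.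
  by exists Z, Q, ze; rewrite eQ.
have hasI : has_lbound SI by exists 0 => r /SIge0.
have hasE : has_lbound SE by exists 0 => r /SEsub /SIge0.
have eqIE : inf SI = inf SE.
  apply/eqP; rewrite eq_le; apply/andP; split.
    apply: lb_le_inf => // y /SEsub Sy; exact: (ge_inf hasI Sy).
  have [r0 Sr0] := SEne.
  apply: lb_le_inf; first by exists r0; exact: SEsub.
  move=> s Ss; rewrite leNgt; apply/negP => hlt.
  set e := inf SE in hlt.
  have s0 := SIge0 s Ss.
  have e0 : 0 < e by apply: le_lt_trans hlt.
  pose c := (s + e) / (2 * e).
  have c01 : 0 < c < 1.
    apply/andP; split; first by apply: divr_gt0; lra.
    by rewrite /c ltr_pdivrMr; lra.
  have := ge_inf hasE (SImix s Ss c c01); rewrite -/e.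
  apply/negP; rewrite -ltNge /c invf_div mulrAC ltr_pdivrMr; last by lra.
  nra.
split => //.
rewrite eqIE.
apply/cvgrPdist_le => e e0.
have e2 : 0 < e / 2 by lra.
have [s Ss hs] := inf_adherent e2 (conj SEne hasE).
have Ss' := Ss.
case: Ss' => X [P [th [hP [lu sE]]]].
set T := \tr (drsubmx (mse rho id P th theta)).
have T0 : 0 <= T by exact: (tr_drsub_ge0 dens).
have dpos : 0 < e / 2 / (T + 1) by apply: divr_gt0; lra.
near=> eps.
have eps0 : 0 < eps by near: eps; exact: nbhs_right_gt.
have epsd : eps < e / 2 / (T + 1) by near: eps; exact: nbhs_right_lt.
set SF := [set r | _].
have SFge : forall r, SF r -> inf SE <= r.
  move=> r [X' [Q [ze [hQ [luQ ->]]]]]; rewrite tr_block.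
  have h1 : SE (\tr (W *m ulsubmx (mse rho id Q ze theta))) by exists X', Q, ze.
  have := ge_inf hasE h1; have := tr_drsub_ge0 dens Tth ze hQ.
  move=> a b; have : 0 <= eps * \tr (drsubmx (mse rho id Q ze theta)).
    by apply: mulr_ge0 => //; exact: ltW.
  lra.
have SFel : SF (s + eps * T) by exists X, P, th; rewrite tr_block sE.
have hasF : has_lbound SF.
  exists (inf SE) => r /SFge //.
have lo : inf SE <= inf SF by apply: lb_le_inf => //; exists (s + eps * T).
have up : inf SF <= s + eps * T by exact: (ge_inf hasF SFel).
have epsT : eps * T <= e / 2.
  have : eps * (T + 1) < e / 2 by rewrite -ltr_pdivlMr //; lra.
  nra.
rewrite distrC ger0_norm ?subr_ge0 //; lra.
Unshelve. all: by end_near.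
Qed.
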